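(* Let $n\ge2$ and let $\{X_i\}_{i\in I}$ be an exhausting family of finite fully characteristic based covers of $R_n$, corresponding to subgroups $K_i=\pi_1(X_i)\le F_n$. Let $\phi\in\mathrm{End}(F_n)$ with $\phi\ne\mathrm{id}_{F_n}$. Then for some $i\in I$ the endomorphism of $H_1(X_i,\mathbb{Z})$ induced by $\phi$ is not the identity.
   Context: $F_n$ is the free group of rank $n\ge2$, identified with $\pi_1(R_n,* )$ where $R_n$ is the wedge of $n$ circles. A subgroup $K\le F_n$ is fully characteristic if $\phi(K)\subseteq K$ for all $\phi\in\mathrm{End}(F_n)$. A finite fully characteristic based cover is the connected covering $(X,x_1)\to(R_n,* )$ corresponding to a finite-index fully characteristic subgroup $K$. The family is exhausting if every $1\ne w\in F_n$ has nontrivial image in some quotient $F_n/K_i$ (i.e. $\bigcap_i K_i=\{1\}$). The endomorphism of $H_1(X_i,\mathbb{Z})\cong K_i^{ab}$ induced by $\phi$ is the abelianization of $\phi|_{K_i}$. *)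

(* Defs.v *)
(* The free group F_n is modelled as reduced words over the
   alphabet 'I_n * bool (generator i, with bool = true meaning the inverse). *)
From mathcomp Require Import ssreflect ssrfun ssrbool eqtype ssrnat seq fintype.
Set Implicit Arguments. Unset Strict Implicit. Unset Printing Implicit Defensive.

Section FreeGroup.
Variable n : nat.

Definition letter := ('I_n * bool)%type.
Definition linv (x : letter) : letter := (x.1, ~~ x.2).

Fixpoint reduce (w : seq letter) : seq letter :=
  match w with
  | [::] => [::]
  | x :: w' =>
      match reduce w' with
      | [::] => [:: x]
      | y :: w'' => if y == linv x then w'' else x :: y :: w''
      end
  end.

Fixpoint reducedb (w : seq letter) : bool :=
  match w with
  | x :: ((y :: _) as w') => (y != linv x) && reducedb w'
  | _ => true
  end.

Lemma reducedb_tail x w : reducedb (x :: w) -> reducedb w.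
Proof. by case: w => //= y w /andP[]. Qed.

Lemma reduce_reduced w : reducedb (reduce w).
Proof.
elim: w => //= x w IH.
case E: (reduce w) IH => [|y w''] //= H.
case: ifP => [_|/negbT Hne]; first exact: reducedb_tail H.
by rewrite /= H Hne.
Qed.


Definition FG := {w : seq letter | reducedb w}.

Definition fg1 : FG := exist _ [::] isT.
Definition fgmul (u v : FG) : FG :=
  exist _ (reduce (sval u ++ sval v)) (reduce_reduced _).
Definition fginv (u : FG) : FG :=
  exist _ (reduce (rev (map linv (sval u)))) (reduce_reduced _).

Definition is_endo (phi : FG -> FG) : Prop :=
  forall a b, phi (fgmul a b) = fgmul (phi a) (phi b).

Definition is_subgroup (K : FG -> Prop) : Prop :=
  [/\ K fg1, (forall a b, K a -> K b -> K (fgmul a b))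
    & (forall a, K a -> K (fginv a))].

Definition finite_index (K : FG -> Prop) : Prop :=
  exists (m : nat) (r : 'I_m -> FG),
    forall g, exists j k, K k /\ g = fgmul (r j) k.

Definition fully_characteristic (K : FG -> Prop) : Prop :=
  forall phi, is_endo phi -> forall k, K k -> K (phi k).

Inductive gen (S : FG -> Prop) : FG -> Prop :=
  | gen_one : gen S fg1
  | gen_base a : S a -> gen S a
  | gen_mul a b : gen S a -> gen S b -> gen S (fgmul a b)
  | gen_inv a : gen S a -> gen S (fginv a).

Definition fgcomm (a b : FG) : FG :=
  fgmul (fgmul (fginv a) (fginv b)) (fgmul a b).

Definition derived (K : FG -> Prop) : FG -> Prop :=
  gen (fun c => exists a b, [/\ K a, K b & c = fgcomm a b]).

(* The endomorphism of H_1(X_K) = K^ab = K/[K,K] induced by phi (abelianization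
   of phi restricted to K) is the identity: phi(k) [K,K] = k [K,K] for k in K. *)
Definition induced_H1_is_id (phi : FG -> FG) (K : FG -> Prop) : Prop :=
  forall k, K k -> derived K (fgmul (phi k) (fginv k)).

End FreeGroup.

(* Main.v *)
Require Import Defs.
From mathcomp Require Import ssreflect ssrfun ssrbool eqtype ssrnat seq fintype.
From Stdlib Require Import ZArith Lia ClassicalEpsilon Classical.
Set Implicit Arguments. Unset Strict Implicit. Unset Printing Implicit Defensive.

Lemma linvK {n} (x : letter n) : linv (linv x) = x.
Proof. by case: x => a b; rewrite /linv /= negbK. Qed.

Lemma reduce_cons_red {n} (x : letter n) w :
  reduce (x :: w) = reduce (x :: reduce w) .
Proof.
rewrite /=. have -> : reduce (reduce w) = reduce w.
  have: reducedb (reduce w) := reduce_reduced w.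
  elim: (reduce w) => //= y w' IH Hr.
  have Hw' := reducedb_tail Hr. rewrite (IH Hw').
  case: w' Hr {IH Hw'} => //= z w'' /andP[Hne _]. by rewrite (negbTE Hne).
done.
Qed.

Lemma reduced_id {n} (w : seq (letter n)) : reducedb w -> reduce w = w.
Proof.
elim: w => //= y w' IH Hr. rewrite (IH (reducedb_tail Hr)).
case: w' Hr {IH} => //= z w'' /andP[Hne _]. by rewrite (negbTE Hne).
Qed.

Lemma reduce_idem {n} (w : seq (letter n)) : reduce (reduce w) = reduce w.
Proof. exact: reduced_id (reduce_reduced w). Qed.

Lemma reduce_catr {n} (u v : seq (letter n)) :
  reduce (u ++ v) = reduce (u ++ reduce v).
Proof.
elim: u => [|x u IH] /=; first by rewrite reduce_idem.
by rewrite IH.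
Qed.

Lemma reduce_pair {n} (x : letter n) w : reduce (x :: linv x :: w) = reduce w.
Proof.
have Hr := reduce_reduced w.
rewrite /=. case E: (reduce w) Hr => [|y w''] Hr /=.
  by rewrite eqxx.
case: ifP => [/eqP Hy | Hne] /=.
  rewrite linvK in Hy; subst y.
  case: w'' Hr {E} => [|z t] Hr //=.
  move: Hr => /= /andP[Hz _]. by rewrite (negbTE Hz).
by rewrite eqxx.
Qed.

Lemma reduce_pair_mid {n} (u : seq (letter n)) x w :
  reduce (u ++ x :: linv x :: w) = reduce (u ++ w).
Proof. by rewrite reduce_catr reduce_pair -reduce_catr. Qed.

Lemma reduce_catl {n} (u v : seq (letter n)) :
  reduce (reduce u ++ v) = reduce (u ++ v).
Proof.
elim: u => [|x u IH]; first by [].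
have -> : reduce ((x :: u) ++ v) = reduce (x :: (reduce u ++ v)).
  rewrite cat_cons reduce_cons_red -IH -reduce_cons_red. by [].
rewrite [reduce (x :: u)]/=.
case: (reduce u) => [|y t] //.
case: ifP => [/eqP Hy | _] //.
subst y. by rewrite cat_cons reduce_pair.
Qed.

Lemma reduce_cat {n} (u v : seq (letter n)) :
  reduce (reduce u ++ reduce v) = reduce (u ++ v).
Proof. by rewrite reduce_catl -reduce_catr. Qed.

Lemma reduce_invl {n} (u : seq (letter n)) : reduce (rev (map (@linv n) u) ++ u) = [::].
Proof.
elim: u => [|x u IH] //=.
rewrite rev_cons -cats1 -catA /=.
have := reduce_pair_mid (rev (map (@linv n) u)) (linv x) u. rewrite linvK => ->.
exact: IH.
Qed.

Lemma reduce_invr {n} (u : seq (letter n)) : reduce (u ++ rev (map (@linv n) u)) = [::].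
Proof.
have := reduce_invl (rev (map (@linv n) u)).
by rewrite map_rev revK -map_comp (eq_map (@linvK n)) map_id.
Qed.

Definition red {n} (u : seq (letter n)) : FG n := exist _ (reduce u) (reduce_reduced u).

Lemma FG_eq {n} (a b : FG n) : sval a = sval b -> a = b.
Proof.
case: a => a Ha; case: b => b Hb /= E. subst b. f_equal. exact: eq_irrelevance.
Qed.

Lemma red_val {n} (a : FG n) : red (sval a) = a.
Proof. apply: FG_eq => /=. exact: reduced_id (svalP a). Qed.

Lemma red_eq {n} (u v : seq (letter n)) : reduce u = reduce v -> red u = red v.
Proof. move=> E; exact: FG_eq. Qed.

Lemma red_mul {n} (u v : seq (letter n)) : fgmul (red u) (red v) = red (u ++ v).
Proof. apply: FG_eq => /=. exact: reduce_cat. Qed.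

Lemma fgmulE {n} (a b : FG n) : fgmul a b = red (sval a ++ sval b).
Proof. by []. Qed.

Lemma fginvE {n} (a : FG n) : fginv a = red (rev (map (@linv n) (sval a))).
Proof. by []. Qed.

Lemma mulgA {n} (a b c : FG n) : fgmul (fgmul a b) c = fgmul a (fgmul b c).
Proof.
rewrite -(red_val a) -(red_val b) -(red_val c) !red_mul. by rewrite catA.
Qed.

Lemma mul1g {n} (a : FG n) : fgmul (fg1 n) a = a.
Proof. by rewrite fgmulE /= red_val. Qed.

Lemma mulg1 {n} (a : FG n) : fgmul a (fg1 n) = a.
Proof. by rewrite fgmulE /= cats0 red_val. Qed.

Lemma mulVg {n} (a : FG n) : fgmul (fginv a) a = fg1 n.
Proof.
rewrite fginvE -{2}(red_val a) red_mul. apply: FG_eq => /=. exact: reduce_invl.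
Qed.

Lemma mulgV {n} (a : FG n) : fgmul a (fginv a) = fg1 n.
Proof.
rewrite fginvE -{1}(red_val a) red_mul. apply: FG_eq => /=. exact: reduce_invr.
Qed.

Lemma mulKg {n} (a b : FG n) : fgmul (fginv a) (fgmul a b) = b.
Proof. by rewrite -mulgA mulVg mul1g. Qed.
Lemma mulKVg {n} (a b : FG n) : fgmul a (fgmul (fginv a) b) = b.
Proof. by rewrite -mulgA mulgV mul1g. Qed.
Lemma mulgK {n} (a b : FG n) : fgmul (fgmul b a) (fginv a) = b.
Proof. by rewrite mulgA mulgV mulg1. Qed.
Lemma mulgKV {n} (a b : FG n) : fgmul (fgmul b (fginv a)) a = b.
Proof. by rewrite mulgA mulVg mulg1. Qed.

Lemma inv_uniq {n} (a b : FG n) : fgmul a b = fg1 n -> b = fginv a.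
Proof. move=> E. by rewrite -(mulKg a b) E mulg1. Qed.

Lemma invMg {n} (a b : FG n) : fginv (fgmul a b) = fgmul (fginv b) (fginv a).
Proof.
symmetry; apply: inv_uniq. by rewrite -mulgA (mulgK b a) mulgV.
Qed.

Lemma invgK {n} (a : FG n) : fginv (fginv a) = a.
Proof. symmetry; apply: inv_uniq. exact: mulVg. Qed.

Fixpoint cnt {n} (z : letter n) (f : seq (letter n) -> Z) (s w : seq (letter n)) {struct w} : Z :=
  match w with
  | [::] => 0%Z
  | l :: w' => ((if l == z then f s else if l == linv z then (- f (s ++ [:: l]))%Z else 0%Z)
                + cnt z f (s ++ [:: l]) w')%Z
  end.

Lemma cnt_cat {n} (z : letter n) f s u v :
  cnt z f s (u ++ v) = (cnt z f s u + cnt z f (s ++ u) v)%Z.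
Proof.
elim: u s => [|l u IH] s /=; first by rewrite cats0.
rewrite IH -catA /=. lia.
Qed.

Lemma cnt_shift {n} (z : letter n) f g s s' w :
  (forall p, f (s ++ p) = g (s' ++ p)) -> cnt z f s w = cnt z g s' w.
Proof.
elim: w s s' => [|l w IH] s s' H //=.
rewrite (IH (s ++ [:: l]) (s' ++ [:: l])); last by move=> p; rewrite -!catA H.
have H0 := H [::]; rewrite !cats0 in H0. rewrite H0 H. by [].
Qed.

Lemma cnt_ext {n} (z : letter n) f g s w :
  (forall p, f p = g p) -> cnt z f s w = cnt z g s w.
Proof. move=> H; apply: cnt_shift => p; exact: H. Qed.

Lemma linv_neq {n} (z : letter n) : (linv z == z) = false.
Proof. case: z => a b; rewrite /linv /= xpair_eqE eqxx /=. by case: b. Qed.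

Lemma linv_eq {n} (l z : letter n) : (linv l == z) = (l == linv z).
Proof.
apply/eqP/eqP => [<-|->]; by rewrite linvK.
Qed.

Lemma cnt_red {n} (z : letter n) f s w :
  (forall p q, reduce p = reduce q -> f p = f q) ->
  cnt z f s w = cnt z f s (reduce w).
Proof.
move=> hf. elim: w s => [|l w IH] s //=.
rewrite IH.
case E: (reduce w) => [|y w''] //=.
case: (eqVneq y (linv l)) => [Hy | Hne]; last by [].
rewrite Hy /=.
have Hs : cnt z f ((s ++ [:: l]) ++ [:: linv l]) w'' = cnt z f s w''.
  apply: cnt_shift => p. apply: hf. by rewrite -!catA /= reduce_pair_mid.
rewrite Hs.
have Hf : f ((s ++ [:: l]) ++ [:: linv l]) = f s.
  apply: hf. by rewrite -catA /= -{2}(cats0 s) reduce_pair_mid.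
rewrite Hf !linv_eq linvK.
have nz : (z == linv z) = false by rewrite eq_sym linv_neq.
case: (eqVneq l z) => [El | Nl].
  subst l. rewrite nz. lia.
case: (eqVneq l (linv z)) => [El | Nl2]; lia.
Qed.

Definition fT {n} (T : FG n -> Prop) (p : seq (letter n)) : Z :=
  if excluded_middle_informative (T (red p)) then 1%Z else 0%Z.

Definition NN {n} (z : letter n) (T : FG n -> Prop) (a : FG n) : Z :=
  cnt z (fT T) [::] (sval a).

Lemma fT_iff {n} (T T' : FG n -> Prop) p p' :
  (T (red p) <-> T' (red p')) -> fT T p = fT T' p'.
Proof.
rewrite /fT => H.
case: excluded_middle_informative => h1; case: excluded_middle_informative => h2 //; exfalso. - exact: h2 (proj1 H h1). - exact: h1 (proj2 H h2).
Qed.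

Lemma fT_red {n} (T : FG n -> Prop) p q : reduce p = reduce q -> fT T p = fT T q.
Proof. move=> E; apply: fT_iff; by rewrite (red_eq E). Qed.

Lemma fT_01 {n} (T : FG n -> Prop) p : fT T p = 1%Z \/ fT T p = 0%Z.
Proof. rewrite /fT; case: excluded_middle_informative; auto. Qed.

Lemma fT_1 {n} (T : FG n -> Prop) p : T (red p) -> fT T p = 1%Z.
Proof. move=> H; rewrite /fT; case: excluded_middle_informative => // h; by exfalso; auto. Qed.
Lemma fT_0 {n} (T : FG n -> Prop) p : ~ T (red p) -> fT T p = 0%Z.
Proof. move=> H; rewrite /fT; case: excluded_middle_informative => // h; by exfalso; auto. Qed.

Lemma NN_val {n} (z : letter n) T (a : FG n) u :
  sval a = reduce u -> NN z T a = cnt z (fT T) [::] u.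
Proof. rewrite /NN => ->. symmetry; apply: cnt_red => p q; exact: fT_red. Qed.

Arguments NN_val {n} z T a u _.

Definition linvar {n} (K T : FG n -> Prop) :=
  forall a q, K a -> (T (fgmul a q) <-> T q).

Lemma red_cat_val {n} (a : FG n) p : red (sval a ++ p) = fgmul a (red p).
Proof. by rewrite -{2}(red_val a) red_mul. Qed.

Lemma NN_mul {n} (z : letter n) K T (a b : FG n) :
  linvar K T -> K a -> NN z T (fgmul a b) = (NN z T a + NN z T b)%Z.
Proof.
move=> hT Ka.
rewrite (NN_val z T _ (sval a ++ sval b)) // cnt_cat.
congr (_ + _)%Z.
apply: cnt_shift => p /=. apply: fT_iff. rewrite red_cat_val. exact: hT.
Qed.

Lemma NN_1 {n} (z : letter n) T : NN z T (fg1 n) = 0%Z.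
Proof. by []. Qed.

Lemma NN_inv {n} (z : letter n) K T (a : FG n) :
  is_subgroup K -> linvar K T -> K a -> NN z T (fginv a) = (- NN z T a)%Z.
Proof.
case=> _ _ Kinv hT Ka.
have := @NN_mul n z K T (fginv a) a hT (Kinv _ Ka). rewrite mulVg NN_1. lia.
Qed.

Lemma NN_derived {n} (z : letter n) K T c :
  is_subgroup K -> linvar K T -> derived K c -> K c /\ NN z T c = 0%Z.
Proof.
move=> hK hT. have hK' := hK. case: hK' => K1 Kmul Kinv.
elim=> [|a [x [y [Kx Ky ->]]]|a b _ [Ka Na] _ [Kb Nb]|a _ [Ka Na]].
- by split.
- have Kxy := Kmul _ _ Kx Ky.
  have Kix := Kinv _ Kx. have Kiy := Kinv _ Ky.
  split; first by apply: (Kmul) => //; apply: (Kmul).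
  rewrite /fgcomm (NN_mul z _ hT (Kmul _ _ Kix Kiy)) (NN_mul z _ hT Kix) (NN_mul z _ hT Kx).
  rewrite (NN_inv z hK hT Kx) (NN_inv z hK hT Ky). lia.
- split; first exact: Kmul. rewrite (NN_mul z _ hT Ka). lia.
- split; first exact: Kinv. rewrite (NN_inv z hK hT Ka). lia.
Qed.

Definition normalK {n} (K : FG n -> Prop) :=
  forall g k, K k -> K (fgmul (fgmul g k) (fginv g)).

Lemma linvar_shift {n} (K T : FG n -> Prop) h :
  normalK K -> linvar K T -> linvar K (fun q => T (fgmul h q)).
Proof.
move=> hN hT a q Ka /=.
have -> : fgmul h (fgmul a q) = fgmul (fgmul (fgmul h a) (fginv h)) (fgmul h q).
  by rewrite !mulgA mulKg.
exact: hT (hN h a Ka).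
Qed.

Lemma NN_conj {n} (z : letter n) K T h k :
  normalK K -> linvar K T -> K k ->
  NN z T (fgmul (fgmul h k) (fginv h)) = NN z (fun q => T (fgmul h q)) k.
Proof.
move=> hN hT Kk.
set H' := rev (map (@linv n) (sval h)).
set Th := fun q => T (fgmul h q).
have hTh : linvar K Th := linvar_shift h hN hT.
rewrite (NN_val z T _ ((sval h ++ sval k) ++ H')); last by rewrite /= reduce_cat.
rewrite !cnt_cat.
have E1 : forall s w, cnt z (fT T) (sval h ++ s) w = cnt z (fT Th) s w.
  move=> s w. transitivity (cnt z (fun p => fT T (sval h ++ p)) s w).
    apply: cnt_shift => p. by rewrite catA.
  apply: cnt_ext => p. apply: fT_iff. by rewrite red_cat_val.
have E2 : cnt z (fT Th) (sval k) H' = cnt z (fT Th) [::] H'.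
  apply: cnt_shift => p /=. apply: fT_iff. rewrite red_cat_val. exact: hTh.
have F1 := E1 [::] (sval k); rewrite cats0 in F1.
have F2 := E1 (sval k) H'.
have F3 := E1 [::] H'; rewrite cats0 in F3.
rewrite !cat0s F1 F2 E2 -F3.
have E3 : (cnt z (fT T) [::] (sval h) + cnt z (fT T) (sval h) H')%Z = 0%Z.
  rewrite -cnt_cat (@cnt_red n z (fT T) [::] _ (fun p q => @fT_red _ T p q)) /H' reduce_invr. by [].
rewrite /NN. lia.
Qed.

Fixpoint S {n} (z : letter n) (f : seq (letter n) -> Z) m : Z :=
  match m with 0 => 0%Z | m'.+1 => (S z f m' + f (nseq m' z))%Z end.

Lemma cnt_nseq {n} (z : letter n) f m : cnt z f [::] (nseq m z) = S z f m.
Proof.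
elim: m => [|m IH]; first by [].
have -> : nseq m.+1 z = nseq m z ++ [:: z] by rewrite -addn1 nseqD.
rewrite cnt_cat IH /= eqxx. lia.
Qed.

Lemma cnt_zero {n} (z : letter n) f s w :
  all (fun l => (l != z) && (l != linv z)) w -> cnt z f s w = 0%Z.
Proof.
elim: w s => [|l w IH] s //= /andP[/andP[H1 H2] Ha].
rewrite (negbTE H1) (negbTE H2) IH //.
Qed.

Definition xp {n} (z : letter n) (m : nat) : FG n := red (nseq m z).

Lemma xpD {n} (z : letter n) a b : xp z (a + b) = fgmul (xp z a) (xp z b).
Proof. by rewrite /xp red_mul nseqD. Qed.

Lemma xp0 {n} (z : letter n) : xp z 0 = fg1 n.
Proof. exact: FG_eq. Qed.

Lemma normal_fc {n} (K : FG n -> Prop) :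
  fully_characteristic K -> normalK K.
Proof.
move=> hfc g k Kk. apply: (hfc (fun a => fgmul (fgmul g a) (fginv g))) => // a b.
by rewrite !mulgA mulKg.
Qed.

Lemma K_linvar {n} (K : FG n -> Prop) : is_subgroup K -> linvar K K.
Proof.
case=> K1 Kmul Kinv a q Ka; split => H.
  rewrite -(mulKg a q). exact: Kmul (Kinv _ Ka) H.
exact: Kmul.
Qed.

Lemma endo1 {n} (phi : FG n -> FG n) : is_endo phi -> phi (fg1 n) = fg1 n.
Proof.
move=> hphi. have E := hphi (fg1 n) (fg1 n). rewrite mul1g in E.
set p := phi (fg1 n) in E *.
have H : fgmul (fginv p) p = fgmul (fginv p) (fgmul p p) by rewrite -E.
rewrite mulKg mulVg in H. by rewrite -H.
Qed.

Lemma endoV {n} (phi : FG n -> FG n) a : is_endo phi -> phi (fginv a) = fginv (phi a).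
Proof.
move=> hphi. apply: inv_uniq. by rewrite -hphi mulgV endo1.
Qed.

Lemma NN_ext {n} (z : letter n) (T T' : FG n -> Prop) a :
  (forall q, T q <-> T' q) -> NN z T a = NN z T' a.
Proof. move=> H; apply: cnt_ext => p; exact: fT_iff. Qed.

Lemma min_ex (P : nat -> Prop) :
  (exists m, 0 < m /\ P m) -> exists m, [/\ 0 < m, P m & forall i, 0 < i -> i < m -> ~ P i].
Proof.
case=> m [Hm Pm].
suff: forall N m, m <= N -> 0 < m -> P m ->
   exists m, [/\ 0 < m, P m & forall i, 0 < i -> i < m -> ~ P i] by move=> Hs; exact: (Hs m m).
clear Hm Pm. elim=> [|N IH] {}m Hle H0 Pm0.
  by move: Hle H0; rewrite leqn0 => /eqP ->.
case: (classic (exists i, [/\ 0 < i, i < m & P i])) => [[i [Hi1 Hi2 Pi]]|Hno].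
  apply: (IH i) => //. exact: leq_trans Hi2 Hle.
exists m; split => // i Hi1 Hi2 Pi. apply: Hno; by exists i.
Qed.

Lemma pigeon {n} (K : FG n -> Prop) (z : letter n) :
  is_subgroup K -> finite_index K -> exists m, 0 < m /\ K (xp z m).
Proof.
move=> [K1 Kmul Kinv] [M [r Hr]].
have Hc : forall i : 'I_M.+1, exists j, exists k, K k /\ xp z i = fgmul (r j) k by move=> i; exact: Hr.
pose F := fun i => proj1_sig (constructive_indefinite_description _ (Hc i)).
have HF : forall i : 'I_M.+1, exists k, K k /\ xp z i = fgmul (r (F i)) k.
  move=> i; exact: proj2_sig (constructive_indefinite_description _ (Hc i)).
have Hninj : ~ injective F.
  move=> /leq_card; rewrite !card_ord. by rewrite ltnn.
have [i1 [i2 [HF12 Hne]]] : exists i1 i2, F i1 = F i2 /\ i1 <> i2.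
  apply: NNPP => Hno; apply: Hninj => a b Hab. apply: NNPP => Hab'. apply: Hno; by exists a, b.
have key : forall (a b : 'I_M.+1), F a = F b -> a < b -> exists m, 0 < m /\ K (xp z m).
  move=> a b Hab Hlt. exists (b - a); split; first by rewrite subn_gt0.
  have [k1 [Kk1 E1]] := HF a. have [k2 [Kk2 E2]] := HF b.
  have E : xp z (b - a) = fgmul (fginv (xp z a)) (xp z b).
    by rewrite -(subnKC (ltnW Hlt)) xpD mulKg subnKC // ltnW.
  rewrite E E1 E2 Hab invMg !mulgA mulKg. exact: Kmul (Kinv _ Kk1) Kk2.
case: (ltngtP i1 i2) => H.
- exact: key HF12 H.
- exact: key (esym HF12) H.
- by exfalso; apply: Hne; apply: val_inj.
Qed.

Lemma S_one {n} (z : letter n) f m :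
  0 < m -> f [::] = 1%Z -> (forall i, 0 < i -> i < m -> f (nseq i z) = 0%Z) -> S z f m = 1%Z.
Proof.
move=> Hm H0; elim: m Hm => [|m IH] // _ Hi.
case: m IH Hi => [|m] IH Hi; first by rewrite /= H0.
change (S z f m.+1 + f (nseq m.+1 z) = 1)%Z. rewrite IH // ?(Hi m.+1) //. by move=> i a b; apply: Hi => //; apply: ltnW.
Qed.

Lemma S_zero {n} (z : letter n) f m :
  (forall i, i < m -> f (nseq i z) = 0%Z) -> S z f m = 0%Z.
Proof.
elim: m => [|m IH] Hi //=. rewrite IH ?Hi //. by move=> i H; apply: Hi; apply: ltnW.
Qed.

Lemma S_nz {n} (z : letter n) f m :
  S z f m <> 0%Z -> exists i, i < m /\ f (nseq i z) <> 0%Z.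
Proof.
elim: m => [|m IH] //= H.
case: (Z.eq_dec (f (nseq m z)) 0%Z) => E.
  have [i [H1 H2]] : exists i, i < m /\ f (nseq i z) <> 0%Z by apply: IH; lia.
  exists i; split => //; exact: ltnW.
by exists m.
Qed.

Lemma fT_nz {n} (T : FG n -> Prop) p : fT T p <> 0%Z -> T (red p).
Proof. move=> H; apply: NNPP => nT; apply: H; exact: fT_0. Qed.

Lemma NN_xp {n} (z : letter n) T m : NN z T (xp z m) = S z (fT T) m.
Proof. by rewrite (NN_val z T _ (nseq m z)) // cnt_nseq. Qed.

Lemma nseq_reduced {n} (z : letter n) m : reducedb (nseq m z).
Proof. elim: m => [|m IH] //. case: m IH => [|m] IH //. rewrite [reducedb _]/= eq_sym linv_neq. exact: IH. Qed.

Lemma key {n} (K : FG n -> Prop) phi g :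
  is_subgroup K -> fully_characteristic K -> is_endo phi -> induced_H1_is_id phi K ->
  forall z k, K k -> NN z (fun q => K (fgmul (fgmul (fginv g) (phi g)) q)) k = NN z K k.
Proof.
move=> hs hfc hphi hid z.
have hN := normal_fc hfc.
have Ph : forall T, linvar K T -> forall u, K u -> NN z T (phi u) = NN z T u.
  move=> T hT u Ku.
  have [Kd Nd] := NN_derived z hs hT (hid u Ku).
  by rewrite -{1}(mulgKV u (phi u)) (NN_mul z _ hT Kd) Nd.
have Cj : forall T, linvar K T -> forall k, K k ->
    NN z (fun q => T (fgmul (phi g) q)) k = NN z (fun q => T (fgmul g q)) k.
  move=> T hT k Kk.
  have Ku := hN g k Kk.
  have e1 : NN z (fun q => T (fgmul g q)) k = NN z T (fgmul (fgmul g k) (fginv g)) :=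
    esym (NN_conj z g hN hT Kk).
  have e2 := Ph T hT _ Ku.
  have e3 : phi (fgmul (fgmul g k) (fginv g)) = fgmul (fgmul (phi g) (phi k)) (fginv (phi g)).
    by rewrite !hphi endoV.
  have e4 := NN_conj z (phi g) hN hT (hfc phi hphi k Kk).
  have e5 := Ph _ (linvar_shift (phi g) hN hT) k Kk.
  by rewrite -e5 -e4 -e3 e2 e1.
move=> k Kk.
set T := fun q => K (fgmul (fginv g) q).
have hT : linvar K T := linvar_shift (fginv g) hN (K_linvar hs).
have := Cj T hT k Kk.
rewrite (@NN_ext n z (fun q => T (fgmul (phi g) q)) (fun q => K (fgmul (fgmul (fginv g) (phi g)) q))); last first.
  by move=> q; rewrite /T mulgA.
rewrite (@NN_ext n z (fun q => T (fgmul g q)) K) //.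
by move=> q; rewrite /T mulKg.
Qed.

Lemma core {n} (hn : 2 <= n) (K : FG n -> Prop) phi g :
  is_subgroup K -> finite_index K -> fully_characteristic K -> is_endo phi ->
  induced_H1_is_id phi K -> ~ K (fgmul (fginv g) (phi g)) -> False.
Proof.
move=> hs hfin hfc hphi hid.
set h := fgmul (fginv g) (phi g) => nKh.
have KEY := key g hs hfc hphi hid.
rewrite -/h in KEY. clearbody h.
set Th := fun q => K (fgmul h q).
have hN := normal_fc hfc.
case: (hs) => K1 Kmul Kinv.
have red0 : red [::] = fg1 n by exact: FG_eq.
have stepA : forall z : letter n, exists m j, [/\ 0 < m, K (xp z m),
    (forall i, 0 < i -> i < m -> ~ K (xp z i)), j < m & K (fgmul h (xp z j))].
  move=> z.
  have [m [Hm Km Hmin]] := min_ex (pigeon z hs hfin).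
  have E1 : NN z K (xp z m) = 1%Z.
    rewrite NN_xp; apply: S_one => //.
      apply: fT_1. by rewrite red0.
    move=> i a b; exact: (fT_0 (Hmin i a b)).
  have := KEY z _ Km; rewrite E1 NN_xp => E2.
  have [j [Hj Hfj]] : exists j, j < m /\ fT Th (nseq j z) <> 0%Z by apply: S_nz; rewrite E2.
  exists m, j; split => //. exact: (fT_nz Hfj).
have h0 : 0 < n by apply: leq_trans hn.
pose x : letter n := (@Ordinal n 0 h0, false).
pose y : letter n := (@Ordinal n 1 hn, false).
have [mx [j [Hmx Kmx Hmin Hj Khj]]] := stepA x.
have [my [t [_ _ _ _ Kht]]] := stepA y.
have j0 : 0 < j.
  case: j Hj Khj {Hmin} => [|j] // _. rewrite xp0 mulg1. by move=> /nKh.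
set k := fgmul (xp x j) (fginv (xp y t)).
have Kk : K k.
  have Kab := Kmul _ _ Khj (Kinv _ Kht).
  have := hN (fginv h) _ Kab. rewrite invgK.
  rewrite invMg !mulgA mulKg mulVg mulg1. by move=> H; exact: H.
have NNk : forall T, NN x T k = S x (fT T) j.
  move=> T. rewrite (NN_val x T k (nseq j x ++ nseq t (linv y))); last first.
    rewrite /= (reduced_id (nseq_reduced y t)) map_nseq rev_nseq. exact: reduce_cat.
  rewrite cnt_cat cnt_nseq cnt_zero; first lia.
  rewrite all_nseq; apply/orP; right. by [].
have N0 : NN x K k = 1%Z.
  rewrite NNk; apply: S_one => //.
    apply: fT_1. by rewrite red0.
  move=> i a b; apply: (fT_0 (Hmin i a _)). exact: ltn_trans b Hj.
have N1 : NN x Th k = 0%Z.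
  rewrite NNk; apply: S_zero => i Hi. apply: fT_0 => Ki.
  have Ed : xp x j = fgmul (xp x i) (xp x (j - i)) by rewrite -xpD subnKC // ltnW.
  have : K (xp x (j - i)).
    have := Kmul _ _ (Kinv _ Ki) Khj. rewrite Ed invMg !mulgA mulKg mulKg. done.
  apply: Hmin; first by rewrite subn_gt0.
  apply: leq_ltn_trans Hj. exact: leq_subr.
have := KEY x k Kk. rewrite -/Th N0 N1. done.
Qed.

Theorem mainTheorem8 (n : nat) (hn : 2 <= n)
  (I : Type) (K : I -> FG n -> Prop)
  (hK : forall i, [/\ is_subgroup (K i), finite_index (K i)
                    & fully_characteristic (K i)])
  (hexh : forall w : FG n, w <> fg1 n -> exists i, ~ K i w)
  (phi : FG n -> FG n) (hphi : is_endo phi)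
  (hneq : ~ (forall g, phi g = g)) :
  exists i, ~ induced_H1_is_id phi (K i).
Proof.
apply: NNPP => Hno.
have Hall : forall i, induced_H1_is_id phi (K i).
  move=> i; apply: NNPP => H; apply: Hno; by exists i.
have [g Hg] := not_all_ex_not _ _ hneq.
have hne : fgmul (fginv g) (phi g) <> fg1 n.
  move=> E; apply: Hg. by rewrite -(mulKVg g (phi g)) E mulg1.
have [i Hi] := hexh _ hne. case: (hK i) => hs hf hfc.
exact: (@core n hn (K i) phi g hs hf hfc hphi (Hall i) Hi).
Qed.
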